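(* For every fixed $\beta>0$, the function $\lambda\mapsto UB(\beta,\lambda)$ is strictly decreasing on $(0,\infty)$.
   Context: $\phi$ and $\Phi$ denote the standard normal density and distribution function. For $\lambda>0$ and $\beta\ge 0$ set $n=\lambda+\beta\sqrt{\lambda}$, $\rho=\lambda/n$, $a=\sqrt{-2n(1-\rho+\ln\rho)}$ (note $1-\rho+\ln\rho\le 0$), and $\gamma=(n-\lambda)/\sqrt{n}=\beta\sqrt{\rho}$. Define $UB(\beta,\lambda)=\left[\rho+\gamma\left(\frac{\Phi(a)}{\phi(a)}+\frac{2}{3\sqrt{n}}\right)\right]^{-1}$. *)

(* Defs.v *)
From Stdlib Require Import Reals Lra.
Open Scope R_scope.

Definition phi (x : R) : R := exp (- (x ^ 2) / 2) / sqrt (2 * PI).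

Lemma phi_continuous : continuity phi.
Proof.
  intro x. unfold phi, Rdiv.
  apply continuity_pt_mult.
  - apply continuity_pt_comp with (f1 := fun x => - (x ^ 2) * / 2).
    + apply continuity_pt_mult.
      * apply continuity_pt_opp. apply derivable_continuous_pt.
        apply derivable_pt_pow.
      * apply continuity_pt_const. intros a b; reflexivity.
    + apply derivable_continuous_pt, derivable_pt_exp.
  - apply continuity_pt_const. intros a b; reflexivity.
Qed.

Lemma phi_integrable (a b : R) : Riemann_integrable phi a b.
Proof.
  destruct (Rle_dec a b) as [H|H].
  - apply continuity_implies_RiemannInt; auto. intros; apply phi_continuous.
  - apply RiemannInt_P1. apply continuity_implies_RiemannInt; [lra|].
    intros; apply phi_continuous.
Qed.

(* standard normal distribution function:
   Phi(a) = 1/2 + \int_0^a phi  (= \int_{-infty}^a phi since phi is even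
   with total mass 1) *)
Definition Phi (a : R) : R := / 2 + RiemannInt (phi_integrable 0 a).

Definition UB (beta lambda : R) : R :=
  let n := lambda + beta * sqrt lambda in
  let rho := lambda / n in
  let a := sqrt (- 2 * n * (1 - rho + ln rho)) in
  let gamma := (n - lambda) / sqrt n in
  / (rho + gamma * (Phi a / phi a + 2 / (3 * sqrt n))).

(* Main.v *)
Require Import Defs.
From Stdlib Require Import Reals Lra Psatz.
From Coquelicot Require Import Coquelicot.
Open Scope R_scope.

Lemma k_ge0 u : 0 <= u -> 2*u <= (2+u)*ln(1+u).
Proof.
  intros Hu. destruct (Req_dec u 0) as [->|Hu0].
  { repeat rewrite Rplus_0_r. rewrite ln_1. lra. }
  destruct (MVT_cor2 (fun x => ln(1+x) - 2*x/(2+x)) (fun x => 1/(1+x) - 4/(2+x)^2) 0 u)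
    as [c [Hc1 Hc2]]; [lra| |].
  { intros c Hc. apply is_derive_Reals. auto_derive; [lra|]. field. lra. }
  assert (Hf : 0 <= 1/(1+c) - 4/(2+c)^2).
  { replace (1/(1+c) - 4/(2+c)^2) with (c^2/((1+c)*(2+c)^2)) by (field; lra).
    apply Rmult_le_pos; [nra|]. apply Rlt_le, Rinv_0_lt_compat. nra. }
  rewrite Rplus_0_r, ln_1 in Hc1.
  assert (0 <= ln (1+u) - 2*u/(2+u)) by (replace (0/(2+0)) with 0 in Hc1 by field; nra).
  assert (2*u/(2+u) <= ln(1+u)) by lra.
  apply (Rmult_le_compat_l (2+u)) in H0; [|lra].
  replace ((2+u)*(2*u/(2+u))) with (2*u) in H0 by (field; lra). exact H0.
Qed.

Definition g (b s : R) := s*(s+b)*(ln(s+b)-ln s) - b*s.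

Lemma g_mono b s1 s2 : 0 < b -> 0 < s1 -> s1 < s2 -> g b s1 <= g b s2.
Proof.
  intros Hb Hs1 Hs12.
  destruct (MVT_cor2 (g b) (fun c => (2*c+b)*(ln(c+b)-ln c) - 2*b) s1 s2)
    as [c [Hc1 Hc2]]; [lra| |].
  { intros c Hc. apply is_derive_Reals. unfold g. auto_derive; [lra|]. field. lra. }
  assert (0 <= (2*c+b)*(ln(c+b)-ln c) - 2*b).
  { assert (E: ln(c+b) - ln c = ln (1 + b/c)).
    { replace (c+b) with (c*(1+b/c)) by (field; lra).
      rewrite ln_mult; [ring|lra|]. assert (0 < b/c) by (apply Rdiv_lt_0_compat; lra). lra. }
    rewrite E. assert (H0 : 0 <= b/c) by (apply Rlt_le, Rdiv_lt_0_compat; lra).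
    pose proof (k_ge0 _ H0).
    replace ((2*c+b)*ln(1+b/c) - 2*b) with (c*((2+b/c)*ln(1+b/c) - 2*(b/c))) by (field; lra).
    apply Rmult_le_pos; lra. }
  nra.
Qed.

Lemma phi_pos a : 0 < phi a.
Proof. unfold phi. apply Rdiv_lt_0_compat. apply exp_pos. apply sqrt_lt_R0.
  pose proof PI_RGT_0. lra. Qed.

Lemma Phi_mono a1 a2 : a1 <= a2 -> Phi a1 <= Phi a2.
Proof.
  intros H. unfold Phi.
  rewrite <- (RiemannInt_P26 (phi_integrable 0 a1) (phi_integrable a1 a2) (phi_integrable 0 a2)).
  assert (0 <= RiemannInt (phi_integrable a1 a2)); [|lra].
  pose proof (RiemannInt_P15 (RiemannInt_P14 a1 a2 0)).
  assert (RiemannInt (RiemannInt_P14 a1 a2 0) <= RiemannInt (phi_integrable a1 a2)).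
  { apply RiemannInt_P19; auto. intros x _. unfold fct_cte. left; apply phi_pos. }
  lra.
Qed.

Lemma Phi_ge a : 0 <= a -> / 2 <= Phi a.
Proof.
  intros H. assert (Phi 0 = /2).
  { unfold Phi. pose proof (RiemannInt_P26 (phi_integrable 0 0) (phi_integrable 0 0) (phi_integrable 0 0)). lra. }
  rewrite <- H0. now apply Phi_mono.
Qed.

Lemma phi_anti a1 a2 : 0 <= a1 <= a2 -> phi a2 <= phi a1.
Proof.
  intros H. unfold phi, Rdiv. apply Rmult_le_compat_r.
  { left. apply Rinv_0_lt_compat, sqrt_lt_R0. pose proof PI_RGT_0. lra. }
  destruct (Rle_lt_or_eq_dec a1 a2) as [Hl|He]; [lra| |].
  - left. apply exp_increasing. nra.
  - subst; lra.
Qed.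

Lemma M_mono a1 a2 : 0 <= a1 <= a2 -> Phi a1 / phi a1 <= Phi a2 / phi a2.
Proof.
  intros H. pose proof (phi_pos a1). pose proof (phi_pos a2).
  pose proof (phi_anti _ _ H). pose proof (Phi_ge a1 (proj1 H)).
  pose proof (Phi_mono a1 a2 (proj2 H)).
  unfold Rdiv. apply Rmult_le_compat; try lra.
  - left; apply Rinv_0_lt_compat; lra.
  - apply Rinv_le_contravar; lra.
Qed.

Lemma M_pos a : 0 <= a -> 0 < Phi a / phi a.
Proof. intros H. apply Rdiv_lt_0_compat; [pose proof (Phi_ge a H); lra | apply phi_pos]. Qed.

Lemma UB_eq b s : 0 < b -> 0 < s ->
  UB b (s*s) = / ((3*s+2*b)/(3*(s+b)) + (b*s/sqrt(s*s+b*s)) *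
     (Phi (sqrt (2*g b s)) / phi (sqrt (2*g b s)))).
Proof.
  intros Hb Hs. unfold UB. cbv zeta.
  rewrite sqrt_square by lra.
  assert (Ea : - 2 * (s*s + b*s) * (1 - s*s/(s*s+b*s) + ln (s*s/(s*s+b*s))) = 2 * g b s).
  { unfold g. rewrite ln_div by nra. rewrite ln_mult by lra.
    replace (s*s+b*s) with (s*(s+b)) by ring. rewrite ln_mult by lra. field. lra. }
  rewrite Ea.
  set (M := Phi (sqrt (2*g b s)) / phi (sqrt (2*g b s))).
  set (q := sqrt (s*s+b*s)).
  assert (Hq : q*q = s*s+b*s) by (apply sqrt_sqrt; nra).
  assert (Hq0 : 0 < q) by (apply sqrt_lt_R0; nra).
  f_equal.
  replace (s*s+b*s - s*s) with (b*s) by ring.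
  rewrite Rmult_plus_distr_l.
  assert (E2 : b*s/q * (2/(3*q)) = 2*(b*s)/(3*(q*q))) by (field; lra).
  rewrite E2, Hq. field. repeat split; nra.
Qed.

Lemma gam_sq b s : 0 < b -> 0 < s -> (b*s/sqrt(s*s+b*s))^2 = b*b*(s/(s+b)).
Proof.
  intros Hb Hs. assert (Hq : sqrt(s*s+b*s) * sqrt(s*s+b*s) = s*s+b*s) by (apply sqrt_sqrt; nra).
  assert (0 < sqrt(s*s+b*s)) by (apply sqrt_lt_R0; nra).
  replace ((b*s/sqrt(s*s+b*s))^2) with (b*b*(s*s)/(sqrt(s*s+b*s) * sqrt(s*s+b*s))) by (field; lra).
  rewrite Hq. field. split; nra.
Qed.

Theorem lemma1 (beta : R) (hbeta : 0 < beta) :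
  forall l1 l2 : R, 0 < l1 -> l1 < l2 -> UB beta l2 < UB beta l1.
Proof.
  intros l1 l2 H1 H12.
  set (s1 := sqrt l1). set (s2 := sqrt l2).
  assert (Hs1 : 0 < s1) by (apply sqrt_lt_R0; lra).
  assert (Hs12 : s1 < s2) by (apply sqrt_lt_1; lra).
  replace l1 with (s1*s1) by (apply sqrt_sqrt; lra).
  replace l2 with (s2*s2) by (apply sqrt_sqrt; lra).
  rewrite (UB_eq beta s1), (UB_eq beta s2) by lra.
  pose proof (gam_sq beta s1 hbeta Hs1) as G1.
  pose proof (gam_sq beta s2 hbeta ltac:(lra)) as G2.
  set (c1 := beta*s1/sqrt(s1*s1+beta*s1)) in *.
  set (c2 := beta*s2/sqrt(s2*s2+beta*s2)) in *.
  assert (Hc1 : 0 <= c1).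
  { unfold c1. apply Rlt_le, Rdiv_lt_0_compat; [nra|]. apply sqrt_lt_R0; nra. }
  assert (Hc2 : 0 <= c2).
  { unfold c2. apply Rlt_le, Rdiv_lt_0_compat; [nra|]. apply sqrt_lt_R0; nra. }
  assert (Hr : s1/(s1+beta) <= s2/(s2+beta)).
  { apply (Rmult_le_reg_r ((s1+beta)*(s2+beta))); [nra|].
    replace (s1/(s1+beta)*((s1+beta)*(s2+beta))) with (s1*(s2+beta)) by (field; lra).
    replace (s2/(s2+beta)*((s1+beta)*(s2+beta))) with (s2*(s1+beta)) by (field; lra).
    nra. }
  assert (Hc : c1 <= c2) by nra.
  set (a1 := sqrt (2*g beta s1)). set (a2 := sqrt (2*g beta s2)).
  assert (Ha : 0 <= a1 <= a2).
  { split; [apply sqrt_pos|]. apply sqrt_le_1_alt.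
    pose proof (g_mono beta s1 s2 hbeta Hs1 Hs12). lra. }
  pose proof (M_mono _ _ Ha) as HM. pose proof (M_pos a1 (proj1 Ha)) as HM1.
  set (M1 := Phi a1 / phi a1) in *. set (M2 := Phi a2 / phi a2) in *.
  assert (HA : (3*s1+2*beta)/(3*(s1+beta)) < (3*s2+2*beta)/(3*(s2+beta))).
  { replace ((3*s1+2*beta)/(3*(s1+beta))) with (1 - beta/(3*(s1+beta))) by (field; lra).
    replace ((3*s2+2*beta)/(3*(s2+beta))) with (1 - beta/(3*(s2+beta))) by (field; lra).
    assert (beta/(3*(s2+beta)) < beta/(3*(s1+beta))); [|lra].
    apply Rmult_lt_compat_l; [lra|]. apply Rinv_lt_contravar; nra. }
  assert (HA0 : 0 < (3*s1+2*beta)/(3*(s1+beta))) by (apply Rdiv_lt_0_compat; nra).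
  assert (c1*M1 <= c2*M2) by (apply Rmult_le_compat; lra).
  assert (0 <= c1*M1) by nra.
  apply Rinv_lt_contravar; nra.
Qed.
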